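(* With framed arithmetic divisors $(L,\xi,\tau)$ ($L$ torsion-free rank 1, $\xi:L\to\widehat{\mathbf{Z}}$ generating $\operatorname{Hom}(L,\widehat{\mathbf{Z}})$ as a $\widehat{\mathbf{Z}}$-module, $\tau:L\to\mathbf{R}$ a homomorphism) and isomorphisms $\phi:L\xrightarrow{\sim}L'$ with $\xi'\circ\phi=\xi$, $\tau'\circ\phi=\tau$, define the tensor product $(L_1,\xi_1,\tau_1)\otimes(L_2,\xi_2,\tau_2)=(L_1\otimes_\mathbf{Z}L_2,\xi,\tau)$ by $\xi(x\otimes y)=\xi_1(x)\xi_2(y)$ (product in $\widehat{\mathbf{Z}}$) and $\tau(x\otimes y)=\tau_1(x)\tau_2(y)$. Let $\operatorname{Pic}_{Fr}(\overline{\operatorname{Spec}\mathbf{Z}})$ be the set of isomorphism classes. For $a=(a_f,a_\infty)\in\mathbb{A}$ (adeles of $\mathbf{Q}$) let $D_a=(L_a,\xi_a,\tau_a)$ with $L_a=\{q\in\mathbf{Q}\mid qa_f\in\widehat{\mathbf{Z}}\}$, $\xi_a(x)=xa_f$, $\tau_a(x)=xa_\infty$. Then the bijection $Y_\mathbf{Q}=\mathbf{Q}^\times\backslash\mathbb{A}\to\operatorname{Pic}_{Fr}(\overline{\operatorname{Spec}\mathbf{Z}})$, $[a]\mapsto[D_a]$, is an isomorphism of monoids: for $a,b\in\mathbb{A}$, $D_{ab}\cong D_a\otimes D_b$. *)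

(* Defs.v *)
From mathcomp Require Import all_boot all_algebra.
From mathcomp Require Import reals.
Import GRing.Theory Num.Theory.

Set Implicit Arguments.
Unset Strict Implicit.
Unset Printing Implicit Defensive.

Local Open Scope ring_scope.

(* An element is a compatible family of residues: [c n] is the residue *)
(* modulo n.+1 (normalized in [0, n]), and for n.+1 | m.+1 the residue *)
(* modulo m.+1 reduces to the residue modulo n.+1.                     *)

Definition zhat_ax (c : nat -> int) : Prop :=
  forall n m : nat, (n.+1 %| m.+1)%N -> modz (c m) n.+1 = c n.

Definition zhat := {c : nat -> int | zhat_ax c}.

Definition zres (x : zhat) : nat -> int := proj1_sig x.

Lemma modz_dvdm_nat (k : int) (n m : nat) :
  (n %| m)%N -> modz (modz k m) n = modz k n.
Proof.
move=> /dvdnP [t ->].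
by rewrite {2}(divz_eq k (t * n)%N) PoszM mulrA modzMDl.
Qed.

Lemma zofint_ax (k : int) : zhat_ax (fun n => modz k n.+1).
Proof. by move=> n m nm; rewrite modz_dvdm_nat. Qed.

Definition zofint (k : int) : zhat := exist _ _ (zofint_ax k).

Lemma zmul_ax (x y : zhat) :
  zhat_ax (fun n => modz (zres x n * zres y n) n.+1).
Proof.
case: x => [c hc]; case: y => [d hd] n m nm /=.
rewrite modz_dvdm_nat // -modzMm.
by rewrite (hc _ _ nm) (hd _ _ nm).
Qed.

Definition zmul (x y : zhat) : zhat := exist _ _ (zmul_ax x y).

(* x / d with x in Zhat and d a positive integer; we work with such    *)
(* representatives.  Two representatives x/d and y/e denote the same   *)
(* finite adele iff e*x = d*y in Zhat (Zhat is torsion free).          *)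

Record fadele := FAdele {
  fa_num : zhat;
  fa_den : nat;
  fa_den_gt0 : (0 < fa_den)%N }.

Definition fa_eq (a b : fadele) : Prop :=
  zmul (zofint (fa_den b)) (fa_num a) = zmul (zofint (fa_den a)) (fa_num b).

Definition fa_of_zhat (z : zhat) : fadele := @FAdele z 1 isT.

Lemma fa_mul_den_gt0 (a b : fadele) : (0 < fa_den a * fa_den b)%N.
Proof. by rewrite muln_gt0 !fa_den_gt0. Qed.

Definition fa_mul (a b : fadele) : fadele :=
  FAdele (zmul (fa_num a) (fa_num b)) (fa_mul_den_gt0 a b).

Lemma fa_scale_den_gt0 (q : rat) (a : fadele) :
  (0 < absz (denq q) * fa_den a)%N.
Proof. by rewrite muln_gt0 fa_den_gt0 absz_gt0 denq_neq0. Qed.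

Definition fa_scale (q : rat) (a : fadele) : fadele :=
  FAdele (zmul (zofint (numq q)) (fa_num a)) (fa_scale_den_gt0 q a).

Record adele (R : realType) := Adele { a_fin : fadele; a_inf : R }.

Definition adele_mul (R : realType) (a b : adele R) : adele R :=
  Adele (fa_mul (a_fin a) (a_fin b)) (a_inf a * a_inf b).

(* [xi_is a q z] means  q * a_f = z  (as finite adeles), z in Zhat;    *)
(* since Zhat is torsion free such z is unique, so this is the graph   *)
(* of xi_a on L_a.                                                     *)

Definition xi_is (R : realType) (a : adele R) (q : rat) (z : zhat) : Prop :=
  fa_eq (fa_scale q (a_fin a)) (fa_of_zhat z).

Definition L_ (R : realType) (a : adele R) (q : rat) : Prop :=
  exists z : zhat, xi_is a q z.

Definition tau_ (R : realType) (a : adele R) (q : rat) : R :=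
  ratr q * a_inf a.

(* Tensor products of subgroups of Q, via the universal property.      *)

Definition bilinear_on (P Q : rat -> Prop) (M : zmodType)
    (f : rat -> rat -> M) : Prop :=
  (forall x1 x2 y, P x1 -> P x2 -> Q y -> f (x1 + x2) y = f x1 y + f x2 y) /\
  (forall x y1 y2, P x -> Q y1 -> Q y2 -> f x (y1 + y2) = f x y1 + f x y2).

Definition additive_on (T : rat -> Prop) (M : zmodType) (g : rat -> M) : Prop :=
  forall s t, T s -> T t -> g (s + t) = g s + g t.

Definition is_tensor (P Q T : rat -> Prop) (beta : rat -> rat -> rat) : Prop :=
  [/\ (forall x y, P x -> Q y -> T (beta x y)),
      bilinear_on P Q beta &
      forall (M : zmodType) (f : rat -> rat -> M), bilinear_on P Q f ->
        exists g : rat -> M,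
          [/\ additive_on T g,
              (forall x y, P x -> Q y -> g (beta x y) = f x y) &
              (forall g' : rat -> M, additive_on T g' ->
                 (forall x y, P x -> Q y -> g' (beta x y) = f x y) ->
                 forall t, T t -> g' t = g t)]].

(* D_c is isomorphic, as a framed arithmetic divisor, to D_a (x) D_b:   *)
(* L_c is the tensor product of L_a and L_b via some beta (so that     *)
(* x (x) y |-> beta x y is a group isomorphism L_a (x) L_b ~ L_c),      *)
(* and this isomorphism carries xi_c, tau_c to the tensor frames       *)
(* xi(x (x) y) = xi_a(x) xi_b(y), tau(x (x) y) = tau_a(x) tau_b(y).     *)
Definition framed_iso_tensor (R : realType) (c a b : adele R) : Prop :=
  exists beta : rat -> rat -> rat,
    [/\ is_tensor (L_ a) (L_ b) (L_ c) beta,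
        (forall x y zx zy, xi_is a x zx -> xi_is b y zy ->
           xi_is c (beta x y) (zmul zx zy)) &
        (forall x y, L_ a x -> L_ b y ->
           tau_ c (beta x y) = tau_ a x * tau_ b y)].

(* Main.v *)
Require Import Defs.
From mathcomp Require Import all_boot all_order all_algebra.
From mathcomp Require Import reals.
From mathcomp Require Import ring lra.
From Stdlib Require Import ClassicalEpsilon FunctionalExtensionality ProofIrrelevance.
Import Order.TTheory GRing.Theory Num.Theory.
Set Implicit Arguments.
Unset Strict Implicit.
Unset Printing Implicit Defensive.
Local Open Scope ring_scope.

Definition subgrp (P : rat -> Prop) :=
  [/\ P 0, (forall x y, P x -> P y -> P (x + y)) & (forall x, P x -> P (- x))].

Lemma subgrp_z P : subgrp P -> forall (k : int) x, P x -> P (x *~ k).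
Proof.
case=> P0 PD PN k x Px.
have Hn : forall n : nat, P (x *+ n).
  by elim=> [|n IH]; rewrite ?mulr0n // mulrS; apply: PD.
by case: k => n; rewrite ?NegzE ?mulrNz; [apply: Hn | apply: PN; apply: Hn].
Qed.

Lemma bil_l P Q (M : zmodType) (f : rat -> rat -> M) :
  subgrp P -> subgrp Q -> bilinear_on P Q f ->
  forall k x y, P x -> Q y -> f (x *~ k) y = f x y *~ k.
Proof.
case=> P0 PD PN _ [fl _] k x y Px Qy.
have f0 : f 0 y = 0.
  have h := fl 0 0 y P0 P0 Qy; rewrite addr0 in h.
  by apply: (@addrI _ (f 0 y)); rewrite addr0 -h.
have Hn : forall n : nat, f (x *+ n) y = f x y *+ n.
  elim=> [|n IH]; first by rewrite !mulr0n.
  have Pn : P (x *+ n) := subgrp_z (And3 P0 PD PN) n Px.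
  by rewrite !mulrS fl // IH.
have fN : forall z, P z -> f (- z) y = - f z y.
  move=> z Pz; have h := fl z (-z) y Pz (PN _ Pz) Qy; rewrite subrr f0 in h.
  by apply/eqP; rewrite -subr_eq0 opprK addrC -h.
case: k => n; rewrite ?NegzE ?mulrNz ?fN ?Hn //.
exact: (subgrp_z (And3 P0 PD PN) n.+1 Px).
Qed.

Lemma bil_r P Q (M : zmodType) (f : rat -> rat -> M) :
  subgrp P -> subgrp Q -> bilinear_on P Q f ->
  forall k x y, P x -> Q y -> f x (y *~ k) = f x y *~ k.
Proof.
move=> sP sQ [fl fr].
pose g := fun y x => f x y.
have bg : bilinear_on Q P g by split=> *; rewrite /g ?fl ?fr.
by move=> k x y Px Qy; have := bil_l sQ sP bg k Qy Px.
Qed.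

Lemma common P x x' : subgrp P -> P x -> P x' -> x != 0 ->
  exists z (k l u v : int), [/\ P z, x = z *~ k, x' = z *~ l & u * l + v * k = 1].
Proof.
move=> sP Px Px' x0.
set q := x' / x.
have := coprime_num_den q; rewrite -[coprime _ _]/(coprimez (numq q) (denq q)).
move=> /eqP cop.
have [u [v huv]] := Bezoutz (numq q) (denq q).
rewrite cop in huv.
have k0 : (denq q)%:~R != 0 :> rat by rewrite intr_eq0 denq_neq0.
have hq : x' * (denq q)%:~R = x * (numq q)%:~R.
  have := divq_num_den q; rewrite /q => e.
  apply: (mulIf (invr_neq0 k0)); rewrite -mulrA divff // mulr1 -mulrA e.
  by rewrite mulrCA divff // mulr1.
exists (x' *~ u + x *~ v), (denq q), (numq q), u, v; split; last exact: huv.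
- by case: (sP) => _ PD _; apply: PD; apply: (subgrp_z sP).
- have e : ((u * numq q + v * denq q)%:~R : rat) = 1 by rewrite huv; reflexivity.
  rewrite -(mulrzr (x' *~ u + x *~ v)) -(mulrzr x') -(mulrzr x).
  apply/eqP; rewrite -subr_eq0; apply/eqP.
  transitivity (x * (1 - (u * numq q + v * denq q)%:~R)); last by rewrite e subrr mulr0.
  rewrite rmorphD !rmorphM /=.
  transitivity (x - (x * (numq q)%:~R * u%:~R + x * v%:~R * (denq q)%:~R)); last by ring.
  by rewrite -hq; ring.
- have e : ((u * numq q + v * denq q)%:~R : rat) = 1 by rewrite huv; reflexivity.
  rewrite -(mulrzr (x' *~ u + x *~ v)) -(mulrzr x') -(mulrzr x).
  apply/eqP; rewrite -subr_eq0; apply/eqP.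
  transitivity (x' * (1 - (u * numq q + v * denq q)%:~R)); last by rewrite e subrr mulr0.
  rewrite rmorphD !rmorphM /=.
  transitivity (x' - (x' * (numq q)%:~R * u%:~R + x' * v%:~R * (denq q)%:~R)); last by ring.
  by rewrite mulrAC (mulrAC x' v%:~R) hq; ring.
Qed.

Lemma f0l P Q (M : zmodType) (f : rat -> rat -> M) :
  subgrp P -> subgrp Q -> bilinear_on P Q f -> forall y, Q y -> f 0 y = 0.
Proof.
move=> sP sQ bf y Qy; case: (sP) => P0 _ _.
by have := bil_l sP sQ bf 0 P0 Qy; rewrite mulr0z => ->.
Qed.

Lemma f0r P Q (M : zmodType) (f : rat -> rat -> M) :
  subgrp P -> subgrp Q -> bilinear_on P Q f -> forall x, P x -> f x 0 = 0.
Proof.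
move=> sP sQ bf x Px; case: (sQ) => Q0 _ _.
by have := bil_r sP sQ bf 0 Px Q0; rewrite mulr0z => ->.
Qed.

Lemma wd P Q (M : zmodType) (f : rat -> rat -> M) x y x' y' :
  subgrp P -> subgrp Q -> bilinear_on P Q f ->
  P x -> Q y -> P x' -> Q y' -> x * y = x' * y' -> f x y = f x' y'.
Proof.
move=> sP sQ bf Px Qy Px' Qy' e.
have zero : forall a b, P a -> Q b -> a * b = 0 -> f a b = 0.
  move=> a b Pa Qb /eqP; rewrite mulf_eq0 => /orP [] /eqP ->.
    exact: (f0l sP sQ bf).
  exact: (f0r sP sQ bf).
have [xy0|xy0] := eqVneq (x * y) 0.
  by rewrite zero // zero // -e.
have x0 : x != 0 by apply: contraNneq xy0 => ->; rewrite mul0r.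
have [z [k [l [u [v [Pz xk x'l huv]]]]]] := common sP Px Px' x0.
have z0 : z != 0 by apply: contraNneq x0 => z0; rewrite xk z0 mul0rz.
have hky : y * k%:~R = y' * l%:~R.
  apply: (mulfI z0); move: e; rewrite xk x'l -(mulrzr z k) -(mulrzr z l).
  by move=> e; transitivity (z * k%:~R * y); [ring | rewrite e; ring].
have e1 : ((u * l + v * k)%:~R : rat) = 1 by rewrite huv; reflexivity.
set w := y *~ u + y' *~ v.
have Qw : Q w by case: (sQ) => _ QD _; apply: QD; apply: (subgrp_z sQ).
have yw : y = w *~ l.
  rewrite /w -(mulrzr (y *~ u + y' *~ v)) -(mulrzr y) -(mulrzr y').
  apply/eqP; rewrite -subr_eq0; apply/eqP.
  transitivity (y * (1 - (u * l + v * k)%:~R)); last by rewrite e1 subrr mulr0.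
  rewrite rmorphD !rmorphM /=.
  transitivity (y - (y * u%:~R * l%:~R + y' * l%:~R * v%:~R)); last by rewrite -hky; ring.
  ring.
have y'w : y' = w *~ k.
  rewrite /w -(mulrzr (y *~ u + y' *~ v)) -(mulrzr y) -(mulrzr y').
  apply/eqP; rewrite -subr_eq0; apply/eqP.
  transitivity (y' * (1 - (u * l + v * k)%:~R)); last by rewrite e1 subrr mulr0.
  rewrite rmorphD !rmorphM /=.
  transitivity (y' - (y * k%:~R * u%:~R + y' * v%:~R * k%:~R)); last by rewrite hky; ring.
  ring.
rewrite xk x'l yw y'w !(bil_l sP sQ bf) ?(subgrp_z sQ) //.
by rewrite !(bil_r sP sQ bf) // mulrzAC.
- exact: (subgrp_z sQ).
- exact: (subgrp_z sQ).
Qed.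

Lemma tensor_mul P Q T : subgrp P -> subgrp Q ->
  (forall x y, P x -> Q y -> T (x * y)) ->
  (forall t, T t -> exists x y, [/\ P x, Q y & t = x * y]) ->
  is_tensor P Q T (fun x y => x * y).
Proof.
move=> sP sQ PQT Tdec; split=> //.
  by split=> *; rewrite ?mulrDl ?mulrDr.
move=> M f bf.
pose Pr t := fun p : rat * rat => [/\ P p.1, Q p.2 & t = p.1 * p.2].
pose i := inhabits ((0 : rat), (0 : rat)).
pose g t := f (epsilon i (Pr t)).1 (epsilon i (Pr t)).2.
have gspec : forall x y, P x -> Q y -> g (x * y) = f x y.
  move=> x y Px Qy.
  have := epsilon_spec i (Pr (x * y)) (ex_intro _ (x, y) (And3 Px Qy erefl)).
  rewrite /g; case: (epsilon i (Pr (x * y))) => a b /= [Pa Qb e].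
  by apply: (wd sP sQ bf) => //; rewrite -e.
have [P0 PD PN] := sP.
exists g; split.
- move=> s t /Tdec [x1 [y1 [Px1 Qy1 ->]]] /Tdec [x2 [y2 [Px2 Qy2 ->]]].
  have [y10|y10] := eqVneq y1 0.
    have Q0 : Q 0 by case: sQ.
    have g0 : g 0 = 0 by rewrite -(mulr0 x1) gspec // (f0r sP sQ bf).
    by rewrite y10 mulr0 add0r g0 add0r.
  have [z [k [l [u [v [Qz yk yl _]]]]]] := common sQ Qy1 Qy2 y10.
  have e : x1 * y1 + x2 * y2 = (x1 *~ k + x2 *~ l) * z.
    by rewrite yk yl -(mulrzr x1) -(mulrzr x2) -(mulrzr z k) -(mulrzr z l); ring.
  have Pk : P (x1 *~ k) by apply: (subgrp_z sP).
  have Pl : P (x2 *~ l) by apply: (subgrp_z sP).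
  have Qk : Q (z *~ k) by apply: (subgrp_z sQ).
  have Ql : Q (z *~ l) by apply: (subgrp_z sQ).
  rewrite e gspec; last by []; last by apply: PD.
  rewrite yk yl gspec // gspec //.
  by case: (bf) => fl _; rewrite fl // !(bil_l sP sQ bf) // !(bil_r sP sQ bf).
- exact: gspec.
- move=> g' g'a g'spec t /Tdec [x [y [Px Qy ->]]].
  by rewrite g'spec // gspec.
Qed.

Lemma zcompat (x : zhat) n m : (n.+1 %| m.+1)%N ->
  (n.+1%:Z %| zres x m - zres x n)%Z.
Proof.
case: x => c hc /= nm; rewrite -(hc n m nm).
by rewrite {1}(divz_eq (c m) n.+1) addrK; apply: dvdz_mull; apply: dvdzz.
Qed.

Lemma modz_sub (t : int) (N : int) : (N %| (t %% N)%Z - t)%Z.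
Proof.
by rewrite {2}(divz_eq t N) opprD addrCA subrr addr0 rpredN; apply: dvdz_mull; apply: dvdzz.
Qed.

Lemma zhat_ext (x y : zhat) : (forall n, zres x n = zres y n) -> x = y.
Proof.
case: x => f hf; case: y => g hg /= H.
have efg : f = g := functional_extensionality _ _ H.
subst g; congr exist; apply: proof_irrelevance.
Qed.

Definition XA (A : fadele) n := zres (fa_num A) n.
Definition dA (A : fadele) : int := (fa_den A)%:Z.

Definition Rel (A : fadele) (p e : int) (z : zhat) :=
  forall n, (n.+1%:Z %| p * XA A n - e * dA A * zres z n)%Z.

Lemma xiE A q z : fa_eq (fa_scale q A) (fa_of_zhat z) <-> Rel A (numq q) (denq q) z.
Proof.
rewrite /fa_eq /Rel /=; split.
- move=> H n; have := congr1 (fun x => zres x n) H => /=.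
  rewrite modzMml modzMmr modzMml mul1r modzMml PoszM abszE gtr0_norm ?denq_gt0 //.
  by move=> /eqP; rewrite eqz_mod_dvd /XA /dA.
- move=> H; apply: zhat_ext => n /=.
  rewrite modzMml modzMmr modzMml mul1r modzMml PoszM abszE gtr0_norm ?denq_gt0 //.
  apply/eqP; rewrite eqz_mod_dvd.
  by have := H n; rewrite /XA /dA.
Qed.

Lemma Rel_scale A (m p e : int) z : 0 < m ->
  Rel A (m * p) (m * e) z <-> Rel A p e z.
Proof.
move=> m0; split=> H n.
- set k := (`|m| * n.+1).-1.
  have kS : k.+1 = (`|m| * n.+1)%N by rewrite prednK // muln_gt0 absz_gt0 gt_eqF.
  have := H k; rewrite kS PoszM gtz0_abs //.
  have -> : m * p * XA A k - m * e * dA A * zres z k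
          = m * (p * XA A k - e * dA A * zres z k) by ring.
  rewrite dvdz_mul2l ?gt_eqF // => Hk.
  have nk : (n.+1 %| k.+1)%N by rewrite kS dvdn_mull.
  have h1 := zcompat (fa_num A) nk; have h2 := zcompat z nk.
  have -> : p * XA A n - e * dA A * zres z n =
    (p * XA A k - e * dA A * zres z k) - p * (XA A k - XA A n)
      + e * dA A * (zres z k - zres z n) by rewrite /XA; ring.
  apply: rpredD; [apply: rpredB => //; exact: dvdz_mull | exact: dvdz_mull].
- have -> : m * p * XA A n - m * e * dA A * zres z n
          = m * (p * XA A n - e * dA A * zres z n) by ring.
  exact: dvdz_mull.
Qed.

Lemma Rel_rep A (p e : int) q z : 0 < e -> q = p%:~R / e%:~R ->
  Rel A p e z <-> Rel A (numq q) (denq q) z.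
Proof.
move=> e0 qe.
have cross : denq q * p = e * numq q.
  apply: (@intr_inj rat); rewrite !rmorphM /=.
  have e0' : (e%:~R : rat) != 0 by rewrite intr_eq0 gt_eqF.
  have d0' : ((denq q)%:~R : rat) != 0 by rewrite intr_eq0 denq_neq0.
  have : (numq q)%:~R / (denq q)%:~R = p%:~R / e%:~R :> rat by rewrite divq_num_den.
  move=> /eqP; rewrite eqr_div // => /eqP.
  by move=> h; rewrite mulrC -h mulrC.
rewrite -(@Rel_scale A (denq q) p e z (denq_gt0 q)) cross.
rewrite -(@Rel_scale A e (numq q) (denq q) z e0) mulrC.
by split; move=> H n; have := H n; rewrite (mulrC e).
Qed.

Lemma zdiv_ex (W : nat -> int) (k : nat) : (0 < k)%N ->
  (forall n m, (n.+1 %| m.+1)%N -> (n.+1%:Z %| W m - W n)%Z) ->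
  (forall n, (k %| n.+1)%N -> (k%:Z %| W n)%Z) ->
  exists z : zhat, forall n, (n.+1%:Z %| W n - k%:Z * zres z n)%Z.
Proof.
move=> k0 Wc Wd.
pose B n := (k * n.+1).-1.
have BS n : (B n).+1 = (k * n.+1)%N by rewrite prednK // muln_gt0 k0.
pose t n := (W (B n) %/ k)%Z.
have tk n : t n * k = W (B n) by apply: divzK; apply: Wd; rewrite BS dvdn_mulr.
have kz : (k%:Z) != 0 by rewrite eqz_nat -lt0n.
have tc : forall n m, (n.+1 %| m.+1)%N -> (n.+1%:Z %| t m - t n)%Z.
  move=> n m nm; have : (k * n.+1 %| k * m.+1)%N by rewrite dvdn_pmul2l.
  rewrite -BS -BS => /Wc; rewrite BS PoszM -tk -tk -mulrBl (mulrC (t m - t n)).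
  by rewrite dvdz_mul2l.
pose zf n := (t n %% n.+1)%Z.
have zax : zhat_ax zf.
  by move=> n m nm; rewrite /zf modz_dvdm_nat //; apply/eqP; rewrite eqz_mod_dvd; apply: tc.
exists (exist _ zf zax) => n /=.
have h1 : (n.+1%:Z %| W n - W (B n))%Z.
  by rewrite -rpredN opprB; apply: Wc; rewrite BS dvdn_mull.
have h2 : (n.+1%:Z %| t n - zf n)%Z by rewrite -rpredN opprB modz_sub.
have -> : W n - k%:Z * zf n = (W n - W (B n)) + k%:Z * (t n - zf n) by rewrite -tk; ring.
by rewrite rpredD // dvdz_mull.
Qed.

Definition LA (A : fadele) (q : rat) := exists z, fa_eq (fa_scale q A) (fa_of_zhat z).

Lemma dA_gt0 A : 0 < dA A.
Proof. by rewrite /dA ltz_nat fa_den_gt0. Qed.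

Lemma L_iff A (p e : int) q : 0 < e -> q = p%:~R / e%:~R ->
  LA A q <-> (forall n, (e * dA A %| n.+1%:Z)%Z -> (e * dA A %| p * XA A n)%Z).
Proof.
move=> e0 qe; split.
- move=> [z /xiE]; rewrite -(Rel_rep _ _ e0 qe) => H n en.
  have := dvdz_trans en (H n) => h.
  have -> : p * XA A n = (p * XA A n - e * dA A * zres z n) + e * dA A * zres z n by ring.
  by rewrite rpredD // dvdz_mulr.
- move=> H.
  have k0 : (0 < `|e| * fa_den A)%N by rewrite muln_gt0 absz_gt0 gt_eqF // fa_den_gt0.
  have kE : (`|e| * fa_den A)%N%:Z = e * dA A by rewrite PoszM gtz0_abs.
  have Wc : forall n m, (n.+1 %| m.+1)%N ->
      (n.+1%:Z %| p * XA A m - p * XA A n)%Z.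
    move=> n m nm /=; rewrite -mulrBr; apply: dvdz_mull; exact: zcompat.
  have Wd : forall n, (`|e| * fa_den A %| n.+1)%N ->
      ((`|e| * fa_den A)%N%:Z %| p * XA A n)%Z.
    by move=> n kn /=; rewrite kE; apply: H; rewrite -kE dvdzE.
  have [z Hz] := zdiv_ex k0 Wc Wd.
  exists z; apply/xiE; rewrite -(Rel_rep _ _ e0 qe) => n.
  by have := Hz n; rewrite kE.
Qed.

Lemma rat_rep (x : rat) : x = (numq x)%:~R / (denq x)%:~R.
Proof. by rewrite divq_num_den. Qed.

Lemma LA_subgrp A : subgrp (LA A).
Proof.
split.
- apply/(@L_iff A 0 1 0) => //.
  by move=> n _; rewrite mul0r dvdz0.
- move=> x y /(L_iff _ (denq_gt0 x) (rat_rep x)) Hx.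
  move=> /(L_iff _ (denq_gt0 y) (rat_rep y)) Hy.
  have e0 : 0 < denq x * denq y by rewrite mulr_gt0 ?denq_gt0.
  have xy : x + y = (numq x * denq y + numq y * denq x)%:~R / (denq x * denq y)%:~R.
    have dx := denq_neq0 x; have dy := denq_neq0 y.
    rewrite {1}(rat_rep x) {1}(rat_rep y) rmorphD !rmorphM /=.
    by field; rewrite !intr_eq0 dx dy.
  apply/(L_iff _ e0 xy) => n en.
  have ex : (denq x * dA A %| n.+1%:Z)%Z.
    apply: dvdz_trans en.
    have -> : denq x * denq y * dA A = denq y * (denq x * dA A) by ring.
    by apply: dvdz_mull; apply: dvdzz.
  have ey : (denq y * dA A %| n.+1%:Z)%Z.
    apply: dvdz_trans en.
    have -> : denq x * denq y * dA A = denq x * (denq y * dA A) by ring.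
    by apply: dvdz_mull; apply: dvdzz.
  have h1 := dvdz_mul (dvdzz (denq y)) (Hx n ex).
  have h2 := dvdz_mul (dvdzz (denq x)) (Hy n ey).
  have -> : (numq x * denq y + numq y * denq x) * XA A n =
    denq y * (numq x * XA A n) + denq x * (numq y * XA A n) by ring.
  apply: rpredD.
    by move: h1; have -> : denq y * (denq x * dA A) = denq x * denq y * dA A by ring.
  by move: h2; have -> : denq x * (denq y * dA A) = denq x * denq y * dA A by ring.
- move=> x /(L_iff _ (denq_gt0 x) (rat_rep x)) Hx.
  have xe : - x = (- numq x)%:~R / (denq x)%:~R by rewrite {1}(rat_rep x) rmorphN mulNr.
  apply/(L_iff _ (denq_gt0 x) xe) => n en.
  by rewrite mulNr rpredN; apply: Hx.
Qed.

Lemma xi_mul A B x y zx zy :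
  fa_eq (fa_scale x A) (fa_of_zhat zx) -> fa_eq (fa_scale y B) (fa_of_zhat zy) ->
  fa_eq (fa_scale (x * y) (fa_mul A B)) (fa_of_zhat (zmul zx zy)).
Proof.
move=> /xiE Hx /xiE Hy; apply/xiE.
have e0 : 0 < denq x * denq y by rewrite mulr_gt0 ?denq_gt0.
have rep : x * y = (numq x * numq y)%:~R / (denq x * denq y)%:~R.
  have dx := denq_neq0 x; have dy := denq_neq0 y.
  rewrite {1}(rat_rep x) {1}(rat_rep y) !rmorphM /=.
  by field; rewrite !intr_eq0 dx dy.
rewrite -(Rel_rep _ _ e0 rep) => n.
have hX : XA (fa_mul A B) n = ((XA A n * XA B n) %% n.+1)%Z by [].
have hd : dA (fa_mul A B) = dA A * dA B by rewrite /dA /= PoszM.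
have hz : zres (zmul zx zy) n = ((zres zx n * zres zy n) %% n.+1)%Z by [].
rewrite hX hd hz.
set X := XA A n; set Y := XA B n; set u := zres zx n; set v := zres zy n.
have h1 := Hx n; have h2 := Hy n; rewrite -/X -/u in h1; rewrite -/Y -/v in h2.
have m1 := modz_sub (X * Y) n.+1; have m2 := modz_sub (u * v) n.+1.
have -> : numq x * numq y * ((X * Y) %% n.+1)%Z -
    denq x * denq y * (dA A * dA B) * ((u * v) %% n.+1)%Z =
  (numq x * X - denq x * dA A * u) * (numq y * Y)
  + (denq x * dA A * u) * (numq y * Y - denq y * dA B * v)
  + numq x * numq y * (((X * Y) %% n.+1)%Z - X * Y)
  - denq x * denq y * (dA A * dA B) * (((u * v) %% n.+1)%Z - u * v) by ring.
apply: rpredB; last exact: dvdz_mull.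
apply: rpredD; last exact: dvdz_mull.
by apply: rpredD; [apply: dvdz_mulr | apply: dvdz_mull].
Qed.

Lemma surj A B t : LA (fa_mul A B) t -> exists x y, [/\ LA A x, LA B y & t = x * y].
Proof.
move=> /(L_iff _ (denq_gt0 t) (rat_rep t)) Hc.
have hd : dA (fa_mul A B) = dA A * dA B by rewrite /dA /= PoszM.
rewrite hd in Hc.
set u := numq t in Hc *; set v := denq t in Hc *.
have v0 : 0 < v := denq_gt0 t.
set Kn := (`|v| * fa_den A * fa_den B)%N.
have KE : Kn%:Z = v * dA A * dA B by rewrite /Kn !PoszM gtz0_abs.
have Kpos : (0 < Kn)%N by rewrite /Kn !muln_gt0 absz_gt0 gt_eqF //= !fa_den_gt0.
set Ki := Kn.-1.
have KiS : Ki.+1 = Kn by rewrite prednK.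
set G := gcdz (XA A Ki) Kn%:Z.
have G0 : 0 < G by rewrite /G /gcdz ltz_nat gcdn_gt0 Kpos orbT.
have GK : (G %| Kn%:Z)%Z := dvdz_gcdr _ _.
have GX : (G %| XA A Ki)%Z := dvdz_gcdl _ _.
have dA0 := dA_gt0 A.
exists ((dA A)%:~R / G%:~R), ((u * G)%:~R / (v * dA A)%:~R); split.
- apply/(L_iff A G0 erefl) => n en.
  rewrite (mulrC G) dvdz_mul2l ?gt_eqF //.
  have GN : (G %| n.+1%:Z)%Z.
    by apply: dvdz_trans en; apply: dvdz_mulr; apply: dvdzz.
  set m := (n.+1 * Kn).-1.
  have mS : m.+1 = (n.+1 * Kn)%N by rewrite prednK // muln_gt0 Kpos.
  have c1 : (Kn%:Z %| XA A m - XA A Ki)%Z.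
    by rewrite -KiS; apply: zcompat; rewrite KiS mS dvdn_mull.
  have c2 : (n.+1%:Z %| XA A m - XA A n)%Z.
    by apply: zcompat; rewrite mS dvdn_mulr.
  have GXm : (G %| XA A m)%Z.
    have -> : XA A m = (XA A m - XA A Ki) + XA A Ki by ring.
    by rewrite rpredD //; apply: dvdz_trans c1.
  have -> : XA A n = XA A m - (XA A m - XA A n) by ring.
  by rewrite rpredB //; apply: dvdz_trans c2.
- have e0 : 0 < v * dA A by apply: mulr_gt0.
  apply: (proj2 (@L_iff B (u * G) (v * dA A) _ e0 erefl)) => n en.
  have KN : (Kn%:Z %| n.+1%:Z)%Z by rewrite KE.
  have h := Hc n; rewrite mulrA in h; have {h} h := h en.
  rewrite -KE in h.
  have m1 := modz_sub (XA A n * XA B n) n.+1.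
  have h3 : (Kn%:Z %| u * (XA A n * XA B n))%Z.
    have -> : u * (XA A n * XA B n) = u * ((XA A n * XA B n) %% n.+1)%Z
       - u * (((XA A n * XA B n) %% n.+1)%Z - XA A n * XA B n) by ring.
    by rewrite rpredB //; apply: dvdz_mull; apply: dvdz_trans m1.
  have c1 : (Kn%:Z %| XA A n - XA A Ki)%Z.
    rewrite -KiS; apply: zcompat; rewrite KiS; move: KN; by rewrite dvdzE.
  have [al [be hab]] := Bezoutz (XA A Ki) Kn%:Z.
  rewrite -/G in hab.
  rewrite -KE.
  have -> : u * G * XA B n = al * (u * (XA A n * XA B n))
     - al * u * XA B n * (XA A n - XA A Ki) + be * (u * XA B n) * Kn%:Z.
    by rewrite -hab; ring.
  apply: rpredD; last by apply: dvdz_mull; apply: dvdzz.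
  by apply: rpredB; apply: dvdz_mull.
- have dx := denq_neq0 t.
  rewrite {1}(rat_rep t) -/u -/v !rmorphM /=.
  field; apply/and3P; split.
  + by rewrite pnatr_eq0 -lt0n fa_den_gt0.
  + by rewrite intr_eq0; exact: dx.
  + by rewrite pnatr_eq0 -lt0n -ltz_nat; exact: G0.
Qed.

Unset Implicit Arguments.

Theorem theorem8p6 (R : realType) (a b : adele R) :
  framed_iso_tensor (adele_mul a b) a b.
Proof.
exists (fun x y => x * y); split.
- apply: tensor_mul.
  + exact: (LA_subgrp (a_fin a)).
  + exact: (LA_subgrp (a_fin b)).
  + by move=> x y [zx hx] [zy hy]; exists (zmul zx zy); apply: xi_mul.
  + by move=> t ht; apply: (surj ht).
- by move=> x y zx zy hx hy; apply: xi_mul.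
- by move=> x y _ _; rewrite /tau_ /= rmorphM /=; ring.
Qed.
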